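(* Let $X_1,\dots,X_n\in\mathbb{R}^d$ be mutually orthogonal ($X_i^\top X_j=0$ for $i\ne j$), $y_1,\dots,y_n\in\mathbb{R}$, $m\ge1$. For $\mathbf U=(u_1,\dots,u_m)\in\mathbb{R}^{d\times m}$ let $$\ell(\mathbf U)=\frac1{2n}\sum_{j=1}^n\Big(\frac1{\sqrt m\,d}\sum_{i=1}^m(X_j^\top u_i)^2-y_j\Big)^2,$$ and run gradient descent $\mathbf U^{(t+1)}=\mathbf U^{(t)}-\eta\nabla\ell(\mathbf U^{(t)})$ with step-size $\eta>0$, where $\mathbf U^{(t)}=(u_1^{(t)},\dots,u_m^{(t)})$. Define $$e_i^{(t)}=\frac1{\sqrt m\,d}\sum_{j=1}^m(X_i^\top u_j^{(t)})^2-y_i,\quad z_i^{(t)}=\frac{2\eta\|X_i\|^2e_i^{(t)}}{\sqrt m\,dn},\quad a_i=\frac{2\eta\|X_i\|^2y_i}{\sqrt m\,dn}.$$ Then $z_i^{(t+1)}=f_{a_i}(z_i^{(t)})$ for all $i$ and $t$, where $f_a(z)=z\big(z^2+(a-2)z+1-2a\big)$. *)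

(* Defs.v *)
From HB Require Import structures.
From mathcomp Require Import all_boot all_order all_algebra.
From mathcomp Require Import all_classical all_reals all_analysis.
Set Implicit Arguments. Unset Strict Implicit. Unset Printing Implicit Defensive.
Import Order.TTheory GRing.Theory Num.Theory.
Import numFieldNormedType.Exports.
Local Open Scope ring_scope.

Definition xu (R : realType) (d m : nat) (X : 'rV[R]_d) (U : 'M[R]_(d, m)) (i : 'I_m) : R :=
  \sum_(k < d) X 0 k * U k i.

Definition sqnorm (R : realType) (d : nat) (X : 'rV[R]_d) : R := \sum_(k < d) X 0 k ^+ 2.

Definition loss (R : realType) (n d m : nat) (X : 'I_n -> 'rV[R]_d) (y : 'I_n -> R)
  (U : 'M[R]_(d, m)) : R :=
  (2 * n%:R)^-1 * \sum_(j < n)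
     ((Num.sqrt m%:R * d%:R)^-1 * (\sum_(i < m) xu (X j) U i ^+ 2) - y j) ^+ 2.

Definition grad (R : realType) (d m : nat) (f : 'M[R]_(d, m) -> R) (U : 'M[R]_(d, m))
  : 'M[R]_(d, m) :=
  \matrix_(k < d, l < m) ('D_(delta_mx k l) f U).

Definition resid (R : realType) (n d m : nat) (X : 'I_n -> 'rV[R]_d) (y : 'I_n -> R)
  (U : 'M[R]_(d, m)) (i : 'I_n) : R :=
  (Num.sqrt m%:R * d%:R)^-1 * (\sum_(j < m) xu (X i) U j ^+ 2) - y i.

Definition fa (R : realType) (a z : R) : R := z * (z ^+ 2 + (a - 2) * z + 1 - 2 * a).

(* Main.v *)
Require Import Defs.
From HB Require Import structures.
From mathcomp Require Import all_boot all_order all_algebra.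
From mathcomp Require Import all_classical all_reals all_analysis.
From mathcomp Require Import ring.
Import Order.TTheory GRing.Theory Num.Theory.
Import numFieldNormedType.Exports.
Local Open Scope ring_scope.

Section S.
Variables (R : realType) (V : normedModType R).

Lemma aff_derive (f : V -> R) x v c :
  (forall h : R, f (h *: v + x) = f x + h * c) -> is_derive x v f c.
Proof.
move=> Hf.
have H : \forall h \near dnbhs (0:R), h^-1 *: ((f \o shift x) (h *: v) - f x) = c.
  near=> h.
  have hn0 : h != 0 by near: h; exact: nbhs_dnbhs_neq.
  by rewrite /= Hf addrC addKr /GRing.scale /= mulrA mulVf // mul1r.
apply: DeriveDef; first exact: is_cvg_near_cst H.
exact: cvg_lim (cvg_near_cst _ H).
Unshelve. all: by end_near.
Qed.

Lemma dsq (f : V -> R) x v df : is_derive x v f df ->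
  is_derive x v (fun N => f N ^+ 2) (2 * f x * df).
Proof.
move=> H; have := is_deriveX 2 H.
have -> : (f ^+ 2) = (fun N => f N ^+ 2) by apply/funext => N; rewrite exprfctE.
by move=> H2; apply: is_derive_eq; rewrite expr1.
Qed.

Lemma dsum n (h : 'I_n -> V -> R) x v dh : (forall i, is_derive x v (h i) (dh i)) ->
  is_derive x v (fun N => \sum_(i < n) h i N) (\sum_(i < n) dh i).
Proof.
move=> H; have := is_derive_sum H.
by have -> : (\sum_(i < n) h i) = (fun N => \sum_(i < n) h i N) by apply/funext => N; rewrite fct_sumE.
Qed.

Lemma dscal (f : V -> R) k x v df : is_derive x v f df ->
  is_derive x v (fun N => k * f N) (k * df).
Proof. move=> H; exact: (is_deriveZ k H). Qed.

Lemma dsubc (f : V -> R) c x v df : is_derive x v f df ->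
  is_derive x v (fun N => f N - c) df.
Proof.
move=> H; have := is_deriveB H (is_derive_cst c x v).
by rewrite subr0.
Qed.
End S.

Section Main.
Variables (R : realType) (n d m : nat) (X : 'I_n -> 'rV[R]_d) (y : 'I_n -> R).

Lemma dxu (Xj : 'rV[R]_d) i (N v : 'M[R]_(d, m)) :
  is_derive N v (fun M => xu Xj M i) (xu Xj v i).
Proof.
apply: aff_derive => h; rewrite /xu mulr_sumr -big_split /=.
by apply: eq_bigr => k _; rewrite !mxE mulrDr /GRing.scale /= mulrCA addrC.
Qed.

Lemma dloss (U v : 'M[R]_(d, m)) :
  'D_v (loss X y) U = (2 * n%:R)^-1 * \sum_(j < n) 2 * resid X y U j *
     ((Num.sqrt m%:R * d%:R)^-1 * \sum_(i < m) 2 * xu (X j) U i * xu (X j) v i).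
Proof.
apply: derive_val.
apply: dscal; apply: dsum => j; apply: dsq; apply: dsubc; apply: dscal.
apply: dsum => i; apply: dsq; exact: dxu.
Qed.

Lemma gradE (U : 'M[R]_(d, m)) k l :
  grad (loss X y) U k l = (2 * n%:R)^-1 * \sum_(j < n) 2 * resid X y U j *
     ((Num.sqrt m%:R * d%:R)^-1 * (2 * xu (X j) U l * X j 0 k)).
Proof.
rewrite /grad mxE dloss; congr (_ * _); apply: eq_bigr => j _; congr (_ * (_ * _)).
rewrite (bigD1 l) //= big1 ?addr0.
  congr (_ * _); rewrite /xu (bigD1 k) //= big1 ?addr0.
    by rewrite mxE !eqxx mulr1.
  by move=> k' /negbTE nk; rewrite mxE nk mulr0.
move=> i /negbTE ni; rewrite [xu (X j) _ i]/xu [X in _ * X]big1 ?mulr0 //.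
by move=> k' _; rewrite mxE ni andbF mulr0.
Qed.

Lemma step_xu (orth : forall i j : 'I_n, i != j -> \sum_(k < d) X i 0 k * X j 0 k = 0)
  (eta : R) (U U' : 'M[R]_(d, m)) (HU : U' = U - eta *: grad (loss X y) U) i l :
  xu (X i) U' l = xu (X i) U l * (1 - 2 * eta * sqnorm (X i) * resid X y U i *
     ((Num.sqrt m%:R * d%:R)^-1 * n%:R^-1)).
Proof.
have E : \sum_(k < d) X i 0 k * grad (loss X y) U k l =
   (2 * n%:R)^-1 * (2 * resid X y U i *
     ((Num.sqrt m%:R * d%:R)^-1 * (2 * xu (X i) U l * sqnorm (X i)))).
  under eq_bigr => k _ do rewrite gradE mulr_sumr mulr_sumr.
  rewrite exchange_big /= (bigD1 i) //= [X in _ + X]big1 ?addr0.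
    rewrite /sqnorm !mulr_sumr; apply: eq_bigr => k _.
    by rewrite expr2; ring.
  move=> j nj.
  transitivity ((2 * n%:R)^-1 * (2 * resid X y U j *
     ((Num.sqrt m%:R * d%:R)^-1 * (2 * xu (X j) U l * \sum_(k < d) X i 0 k * X j 0 k)))).
    by rewrite !mulr_sumr; apply: eq_bigr => k _; ring.
  by rewrite orth ?mulr0 // eq_sym.
rewrite HU /xu.
under eq_bigr => k _ do rewrite 3!mxE mulrDr.
rewrite big_split /= -/(xu (X i) U l).
under eq_bigr => k _ do rewrite mulrN /GRing.scale /= mulrCA.
rewrite sumrN -mulr_sumr E invfM.
have key : (2:R)^-1 * 2 = 1 by rewrite mulVf // pnatr_eq0.
set s := (_ * _)^-1; set ni := n%:R^-1; set r := resid _ _ _ _.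
set x := xu (X i) U l.
transitivity (x + - (eta * (((2:R)^-1 * 2) * ni * (r * (s * (2 * x * sqnorm (X i))))))).
  ring.
rewrite key; ring.
Qed.
End Main.

Theorem theorem4 (R : realType) (n d m : nat) (X : 'I_n -> 'rV[R]_d) (y : 'I_n -> R)
  (eta : R) (U : nat -> 'M[R]_(d, m)) :
  (0 < m)%N ->
  (forall i j : 'I_n, i != j -> \sum_(k < d) X i 0 k * X j 0 k = 0) ->
  0 < eta ->
  (forall t, U t.+1 = U t - eta *: grad (loss X y) (U t)) ->
  let z t i := 2 * eta * sqnorm (X i) * resid X y (U t) i
               / (Num.sqrt m%:R * d%:R * n%:R) in
  let a i := 2 * eta * sqnorm (X i) * y i / (Num.sqrt m%:R * d%:R * n%:R) in
  forall (t : nat) (i : 'I_n), z t.+1 i = fa (a i) (z t i).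
Proof.
move=> _ orth _ HU.
have E t i : resid X y (U t.+1) i = (resid X y (U t) i + y i) *
   (1 - 2 * eta * sqnorm (X i) * resid X y (U t) i *
     ((Num.sqrt m%:R * d%:R)^-1 * n%:R^-1)) ^+ 2 - y i.
  rewrite {1}/resid.
  under eq_bigr => l _ do rewrite (@step_xu R n d m X y orth eta _ _ (HU t)) exprMn.
  rewrite -mulr_suml /resid; set S := \sum_(_ < m) _; set s := (_ * _)^-1; set q := s / _; clearbody S s q; ring.
move=> z a t i; rewrite /z /a /fa E !invfM; ring.
Qed.
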